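(* Let $n\ge1$ and $\mathcal{N}=\mathbb{C}^{2^n}$. There is no subspace $\mathcal{M}\subseteq\mathcal{N}$ of dimension $2$ that separates $\mathcal{E}_{\mathrm{phase}}$ with at most $\alpha=\frac1{10}$ error.
   Context: $\mathcal{N}$ has standard basis $\{|x\rangle : x\in\{0,1\}^n\}$. For $S\subseteq\{0,1\}^n$ and $\theta\in[0,2\pi)$, $E_{S,\theta}$ is the linear operator with $E_{S,\theta}|x\rangle=e^{i\theta}|x\rangle$ if $x\in S$ and $E_{S,\theta}|x\rangle=|x\rangle$ otherwise. $\mathcal{E}_{\mathrm{phase}}=\{E_{S,\theta}: S\subseteq\{0,1\}^n,\ \theta\in\{0,\pi/4,\pi/2\}\}$. A subspace $\mathcal{M}$ separates a set $\mathcal{E}$ of operators with at most $\alpha$ error if for any $X,Y\in\mathcal{E}$ and any unit vectors $\phi_1,\phi_2\in\mathcal{M}$ with $\phi_1^*\phi_2=0$, $|\phi_1^*X^*Y\phi_2|\le\alpha$. *)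

(* Defs.v *)
From HB Require Import structures.
From mathcomp Require Import all_boot all_order all_algebra.
From mathcomp Require Import complex.
From mathcomp Require Import reals trigo.
Set Implicit Arguments. Unset Strict Implicit. Unset Printing Implicit Defensive.
Import Order.TTheory GRing.Theory Num.Theory.
Local Open Scope ring_scope.
Local Open Scope complex_scope.

Section Defs.
Variable R : realType.

Definition expi (theta : R) : R[i] := (cos theta) +i* (sin theta).

(* The Hilbert space N = C^(2^n); the standard basis |x>, x in {0,1}^n, is
   indexed by 'I_(2^n) (via the binary encoding of x). *)
Variable n : nat.
Local Notation N := (2 ^ n)%N.

Definition E_op (S : {set 'I_N}) (theta : R) : 'M[R[i]]_N :=
  diag_mx (\row_(x < N) (if x \in S then expi theta else 1)).

Definition E_phase : 'M[R[i]]_N -> Prop :=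
  fun X => exists (S : {set 'I_N}) (theta : R),
      (theta = 0 \/ theta = pi / 4 \/ theta = pi / 2) /\ X = E_op S theta.

Definition adj {m p : nat} (A : 'M[R[i]]_(m, p)) : 'M[R[i]]_(p, m) :=
  (map_mx Num.conj A)^T.

Definition ip (u v : 'cV[R[i]]_N) : R[i] := (adj u *m v) 0 0.

(* A subspace of N is represented by a matrix whose rows span it (row space);
   a column vector phi lies in it iff phi^T is in the row space. *)
Definition in_sub {m : nat} (M : 'M[R[i]]_(m, N)) (phi : 'cV[R[i]]_N) : bool :=
  (phi^T <= M)%MS.

Definition separates {m : nat} (M : 'M[R[i]]_(m, N))
    (E : 'M[R[i]]_N -> Prop) (alpha : R) : Prop :=
  forall X Y : 'M[R[i]]_N, E X -> E Y ->
  forall phi1 phi2 : 'cV[R[i]]_N,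
    in_sub M phi1 -> in_sub M phi2 ->
    ip phi1 phi1 = 1 -> ip phi2 phi2 = 1 -> ip phi1 phi2 = 0 ->
    `| (adj phi1 *m adj X *m Y *m phi2) 0 0 | <= alpha%:C.

End Defs.

(* Main.v *)
Require Import Defs.
From HB Require Import structures.
From mathcomp Require Import all_boot all_order all_algebra.
From mathcomp Require Import complex.
From mathcomp Require Import reals trigo.
From mathcomp Require Import ring lra.
Import Order.TTheory GRing.Theory Num.Theory.
Local Open Scope ring_scope.
Local Open Scope complex_scope.

Section S.
Variable R : realType.
Variable n : nat.
Local Notation N := (2 ^ n)%N.
Local Notation C := R[i].

Lemma ipE (u v : 'cV[C]_N) : ip u v = \sum_j (u j 0)^* * v j 0.
Proof. rewrite /ip /adj mxE; apply eq_bigr => j _; rewrite !mxE //. Qed.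

Lemma ReM (z w : C) : complex.Re (z^* * w) = complex.Re z * complex.Re w + complex.Im z * complex.Im w.
Proof. case: z => a b; case: w => c d; simpc => /=. ring. Qed.
Lemma ImM (z w : C) : complex.Im (z^* * w) = complex.Re z * complex.Im w - complex.Im z * complex.Re w.
Proof. case: z => a b; case: w => c d; simpc => /=. ring. Qed.

Lemma Re_sum (F : 'I_N -> C) : complex.Re (\sum_j F j) = \sum_j complex.Re (F j).
Proof.
symmetry; apply: (big_rec2 (fun x y => x = complex.Re y)) => // j x y _ ->.
by case: (F j) => a b; case: y => c d.
Qed.
Lemma Im_sum (F : 'I_N -> C) : complex.Im (\sum_j F j) = \sum_j complex.Im (F j).
Proof.
symmetry; apply: (big_rec2 (fun x y => x = complex.Im y)) => // j x y _ ->.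
by case: (F j) => a b; case: y => c d.
Qed.

Lemma entryE (u v : 'cV[C]_N) (d e : 'rV[C]_N) :
  (adj u *m adj (diag_mx d) *m diag_mx e *m v) 0 0 =
  \sum_j (u j 0)^* * (d 0 j)^* * e 0 j * v j 0.
Proof.
rewrite /adj map_diag_mx tr_diag_mx !mul_mx_diag mxE; apply eq_bigr => j _.
by rewrite !mxE.
Qed.

Lemma expi0 : expi (0 : R) = 1.
Proof. by rewrite /expi cos0 sin0. Qed.
Lemma expipi2 : expi (pi / 2 : R) = Complex 0 1.
Proof. by rewrite /expi cos_pihalf sin_pihalf. Qed.

Lemma sqrt_bound (s : R) : 0 <= s -> Num.sqrt s <= 1/10 -> s <= 1/100.
Proof.
move=> s0 h; have r0 := sqrtr_ge0 s; have := sqr_sqrtr s0.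
move: (Num.sqrt s) r0 h => r r0 h <-; nra.
Qed.

Lemma KT (M : 'M[C]_(2, N)) (hsep : separates M (E_phase (R := R) (n := n)) (1/10))
  (phi1 phi2 : 'cV[C]_N) (h1 : in_sub M phi1) (h2 : in_sub M phi2)
  (u1 : ip phi1 phi1 = 1) (u2 : ip phi2 phi2 = 1) (o12 : ip phi1 phi2 = 0)
  (T : {set 'I_N}) :
  let c := fun j => (phi1 j 0)^* * phi2 j 0 in
  \sum_j (if j \in T then complex.Re (c j) else 0) <= 1/10 /\
  \sum_j (if j \in T then complex.Im (c j) else 0) <= 1/10.
Proof.
move=> c.
have hX : E_phase (R := R) (n := n) (E_op set0 0) by exists set0, 0; split=> //; left.
have hY : E_phase (R := R) (n := n) (E_op T (pi/2)) by exists T, (pi/2); split=> //; right; right.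
have h := hsep _ _ hX hY phi1 phi2 h1 h2 u1 u2 o12.
rewrite /E_op entryE in h.
set z := \sum_j _ in h.
have hz : z = \sum_j c j * (if j \in T then Complex 0 1 else 1).
  apply: eq_bigr => j _; rewrite !mxE in_set0 expipi2 rmorph1 mulr1 /c.
  by rewrite -mulrA [_ * phi2 j 0]mulrC mulrA.
have hRe : complex.Re z = \sum_j (if j \in T then - complex.Im (c j) else complex.Re (c j)).
  rewrite hz Re_sum; apply: eq_bigr => j _; case: ifP => _; last by rewrite mulr1.
  by rewrite ReiNIm.
have hIm : complex.Im z = \sum_j (if j \in T then complex.Re (c j) else complex.Im (c j)).
  rewrite hz Im_sum; apply: eq_bigr => j _; case: ifP => _; last by rewrite mulr1.
  by rewrite ImiRe.
have s0 : \sum_j complex.Re (c j) = 0 by rewrite -Re_sum /c -ipE o12.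
have t0 : \sum_j complex.Im (c j) = 0 by rewrite -Im_sum /c -ipE o12.
set U := \sum_j (if j \in T then complex.Re (c j) else 0).
set V := \sum_j (if j \in T then complex.Im (c j) else 0).
have eR : complex.Re z = - U - V.
  rewrite hRe (eq_bigr (fun j => complex.Re (c j) + (- (if j \in T then complex.Re (c j) else 0) - (if j \in T then complex.Im (c j) else 0)))); last by move=> j _; case: ifP => _; lra.
  by rewrite big_split /= s0 add0r big_split /= !sumrN.
have eI : complex.Im z = U - V.
  rewrite hIm (eq_bigr (fun j => complex.Im (c j) + ((if j \in T then complex.Re (c j) else 0) - (if j \in T then complex.Im (c j) else 0)))); last by move=> j _; case: ifP => _; lra.
  by rewrite big_split /= t0 add0r big_split /= !sumrN.
rewrite normc_def lecR in h.
have := sqrt_bound _ (addr_ge0 (sqr_ge0 _) (sqr_ge0 _)) h.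
rewrite eR eI => hh; split; nra.
Qed.

Lemma L1 (f : 'I_N -> R) (eps : R) : \sum_j f j = 0 ->
  (forall T : {set 'I_N}, \sum_j (if j \in T then f j else 0) <= eps) ->
  \sum_j `|f j| <= 2 * eps.
Proof.
move=> s0 hT; have h := hT [set j | 0 <= f j].
rewrite (eq_bigr (fun j => 2 * (if j \in [set j | 0 <= f j] then f j else 0) - f j)); last first.
  move=> j _; rewrite inE; case: ifP => h'; first by rewrite ger0_norm //; lra.
  rewrite ltr0_norm ?ltNge ?h' //; lra.
rewrite sumrB -mulr_sumr s0 subr0; lra.
Qed.

Lemma K (M : 'M[C]_(2, N)) (hsep : separates M (E_phase (R := R) (n := n)) (1/10))
  (phi1 phi2 : 'cV[C]_N) (h1 : in_sub M phi1) (h2 : in_sub M phi2)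
  (u1 : ip phi1 phi1 = 1) (u2 : ip phi2 phi2 = 1) (o12 : ip phi1 phi2 = 0) :
  \sum_j `|complex.Re ((phi1 j 0)^* * phi2 j 0)| <= 1/5 /\
  \sum_j `|complex.Im ((phi1 j 0)^* * phi2 j 0)| <= 1/5.
Proof.
have e : (1/5 : R) = 2 * (1/10) by lra.
have s0 : \sum_j complex.Re ((phi1 j 0)^* * phi2 j 0) = 0 by rewrite -Re_sum -ipE o12.
have t0 : \sum_j complex.Im ((phi1 j 0)^* * phi2 j 0) = 0 by rewrite -Im_sum -ipE o12.
rewrite e; split; apply: L1 => // T; have [hA hB] := KT M hsep phi1 phi2 h1 h2 u1 u2 o12 T; by [].
Qed.

Lemma in_subZ (M : 'M[C]_(2, N)) (k : C) (w : 'cV[C]_N) : in_sub M w -> in_sub M (k *: w).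
Proof.
rewrite /in_sub => h; have -> : (k *: w)^T = k *: w^T by apply/matrixP => i j; rewrite !mxE.
exact: scalemx_sub.
Qed.
Lemma in_subD (M : 'M[C]_(2, N)) (v w : 'cV[C]_N) : in_sub M v -> in_sub M w -> in_sub M (v + w).
Proof.
rewrite /in_sub => h1 h2; have -> : (v + w)^T = v^T + w^T by apply/matrixP => i j; rewrite !mxE.
exact: addmx_sub.
Qed.
Lemma in_subB (M : 'M[C]_(2, N)) (v w : 'cV[C]_N) : in_sub M v -> in_sub M w -> in_sub M (v - w).
Proof.
move=> h1 h2; rewrite -scaleN1r; apply: in_subD => //; exact: in_subZ.
Qed.

Lemma ipDl (u v w : 'cV[C]_N) : ip (u + v) w = ip u w + ip v w.
Proof. rewrite !ipE -big_split; apply: eq_bigr => j _; by rewrite !mxE rmorphD mulrDl. Qed.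
Lemma ipDr (u v w : 'cV[C]_N) : ip w (u + v) = ip w u + ip w v.
Proof. rewrite !ipE -big_split; apply: eq_bigr => j _; by rewrite !mxE mulrDr. Qed.
Lemma ipZl (k : C) (u w : 'cV[C]_N) : ip (k *: u) w = k^* * ip u w.
Proof. rewrite !ipE mulr_sumr; apply: eq_bigr => j _; by rewrite !mxE rmorphM mulrA. Qed.
Lemma ipZr (k : C) (u w : 'cV[C]_N) : ip w (k *: u) = k * ip w u.
Proof. rewrite !ipE mulr_sumr; apply: eq_bigr => j _; by rewrite !mxE mulrCA. Qed.
Lemma ipC (u w : 'cV[C]_N) : ip w u = (ip u w)^*.
Proof. rewrite !ipE rmorph_sum; apply: eq_bigr => j _; rewrite rmorphM mulrC; congr (_ * _); exact: (esym (conjCK _)). Qed.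
Lemma ipNl (u w : 'cV[C]_N) : ip (- u) w = - ip u w.
Proof. by rewrite -scaleN1r ipZl rmorphN1 mulN1r. Qed.
Lemma ipNr (u w : 'cV[C]_N) : ip w (- u) = - ip w u.
Proof. by rewrite -scaleN1r ipZr mulN1r. Qed.

Definition sq (w : 'cV[C]_N) : R :=
  \sum_j ((complex.Re (w j 0)) ^+ 2 + (complex.Im (w j 0)) ^+ 2).

Lemma ipww (w : 'cV[C]_N) : ip w w = (sq w)%:C.
Proof.
rewrite ipE /sq rmorph_sum; apply: eq_bigr => j _.
by case: (w j 0) => a b; simpc => /=; congr (_ +i* _); ring.
Qed.

Lemma sq_ge0 (w : 'cV[C]_N) : 0 <= sq w.
Proof. by apply: sumr_ge0 => j _; rewrite addr_ge0 ?sqr_ge0. Qed.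

Lemma sq_eq0 (w : 'cV[C]_N) : sq w = 0 -> w = 0.
Proof.
move=> h; apply/matrixP => j k; rewrite (ord1 k) [RHS]mxE.
have := psumr_eq0P (fun i _ => addr_ge0 (sqr_ge0 (complex.Re (w i 0))) (sqr_ge0 (complex.Im (w i 0)))) h (i:=j) isT.
case: (w j 0) => x y /= hxy; apply/eqP; rewrite eq_complex /=; apply/andP; split; apply/eqP; nra.
Qed.

Lemma normalize (M : 'M[C]_(2, N)) (w : 'cV[C]_N) : in_sub M w -> w != 0 ->
  exists a, [/\ in_sub M a, ip a a = 1 & exists k : C, a = k *: w].
Proof.
move=> hw nz; have s0 := sq_ge0 w.
have sp : 0 < sq w.
  rewrite lt_def s0 andbT; apply/eqP => /sq_eq0 h; by rewrite h eqxx in nz.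
set t := (Num.sqrt (sq w))^-1.
exists (t%:C *: w); split; [exact: in_subZ| |by exists t%:C].
have ct : (t%:C)^* = t%:C by exact: conjc_real.
rewrite ipZl ipZr ipww; apply/eqP; rewrite eq_complex /=.
rewrite !(mulr0, mul0r, subr0, oppr0, addr0) eqxx andbT.
have -> : t * (t * sq w) = 1.
  have r0 : 0 < Num.sqrt (sq w) by rewrite sqrtr_gt0.
  have := sqr_sqrtr s0; rewrite /t; move: (Num.sqrt (sq w)) r0 => r r0 <-.
  field; lra.
by [].
Qed.

Lemma onb (M : 'M[C]_(2, N)) : \rank M = 2%N -> exists a b,
  [/\ in_sub M a, in_sub M b, ip a a = 1, ip b b = 1 & ip a b = 0].
Proof.
move=> rk; have rf : row_free M by rewrite /row_free rk.
have inj := row_free_inj (m := 1) rf.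
set r1 := (row 0 M)^T; set r2 := (row 1 M)^T.
have i1 : in_sub M r1 by rewrite /in_sub trmxK row_sub.
have i2 : in_sub M r2 by rewrite /in_sub trmxK row_sub.
have nz1 : r1 != 0.
  apply/eqP => h; have : row 0 M = 0 by rewrite -[row 0 M]trmxK -/r1 h trmx0.
  rewrite rowE -(mul0mx 1 M) => /inj /matrixP /(_ 0 0).
  rewrite !mxE /= => /eqP; by rewrite oner_eq0.
have [a [ia ua [k1 ea]]] := normalize M r1 i1 nz1.
set b' := r2 - (ip a r2) *: a.
have ib' : in_sub M b' by apply: in_subB => //; exact: in_subZ.
have ob' : ip a b' = 0 by rewrite /b' ipDr ipNr ipZr ua mulr1 subrr.
have nzb : b' != 0.
  apply/eqP; rewrite /b' {2}ea scalerA => h; set c := ip a r2 * k1.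
  have hT : row 1 M - c *: row 0 M = 0.
    apply/matrixP => i j; have := congr1 (fun m : 'cV[C]_N => m j i) h.
    by rewrite /r1 /r2 !mxE.
  move: hT; rewrite !rowE scalemxAl -mulmxBl -(mul0mx _ M) => /inj /matrixP /(_ 0 1).
  rewrite !mxE /= mulr0 subr0 => /eqP; by rewrite oner_eq0.
have [b [ib ub [k2 eb]]] := normalize M b' ib' nzb.
exists a, b; split => //; by rewrite eb ipZr ob' mulr0.
Qed.

Lemma pointwise (a1 a2 b1 b2 : R) :
  (a1^+2 + a2^+2) + (b1^+2 + b2^+2) <=
  `|(a1^+2 + a2^+2) - (b1^+2 + b2^+2)| + 2 * (`|a1*b1 + a2*b2| + `|a1*b2 - a2*b1|).
Proof.
set p := a1^+2 + a2^+2; set q := b1^+2 + b2^+2.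
set R1 := a1*b1 + a2*b2; set I1 := a1*b2 - a2*b1.
have e : R1^+2 + I1^+2 = p * q by rewrite /R1 /I1 /p /q; ring.
have hp : 0 <= p by rewrite /p addr_ge0 ?sqr_ge0.
have hq : 0 <= q by rewrite /q addr_ge0 ?sqr_ge0.
have n1 : `|R1|^+2 = R1^+2 by rewrite -normrX ger0_norm ?sqr_ge0.
have n2 : `|I1|^+2 = I1^+2 by rewrite -normrX ger0_norm ?sqr_ge0.
have g1 := normr_ge0 R1; have g2 := normr_ge0 I1.
set r := `|R1| + `|I1|.
have r0 : 0 <= r by rewrite addr_ge0.
have hr : p * q <= r^+2.
  rewrite -e /r [in X in _ <= X]sqrrD n1 n2; have := mulr_ge0 g1 g2; lra.
move: hr r0; move: (r) => s hr s0.
case: (lerP q p) => hpq.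
  have : q <= s by nra.
  lra.
have : p <= s by nra.
lra.
Qed.

Lemma rot (t : R) (x y : C) :
  complex.Re ((t%:C * (x + y))^* * (t%:C * (x - y))) =
  t^+2 * ((complex.Re x ^+ 2 + complex.Im x ^+ 2) - (complex.Re y ^+ 2 + complex.Im y ^+ 2)).
Proof. case: x => a b; case: y => c d; rewrite /=. ring. Qed.

Lemma main_false (M : 'M[C]_(2, N)) : \rank M = 2%N ->
  separates M (E_phase (R := R) (n := n)) (1/10) -> False.
Proof.
move=> rk hsep.
have [a [b [ia ib ua ub oab]]] := onb M rk.
have [Ka1 Ka2] := K M hsep a b ia ib ua ub oab.
set t : R := (Num.sqrt 2)^-1.
have t2 : t ^+ 2 = 1/2.
  have := @sqr_sqrtr R 2 (ler0n _ 2); have : 0 < Num.sqrt (2:R) by rewrite sqrtr_gt0.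
  rewrite /t; move: (Num.sqrt 2) => r r0 h2; rewrite exprVn h2; by field.
set u := t%:C *: (a + b); set v := t%:C *: (a - b).
have iu : in_sub M u by apply: in_subZ; apply: in_subD.
have iv : in_sub M v by apply: in_subZ; apply: in_subB.
have oba : ip b a = 0 by rewrite ipC oab rmorph0.
have uu : ip u u = 1.
  rewrite /u ipZl ipZr ipDl !ipDr ua ub oab oba; apply/eqP; rewrite eq_complex /=.
  by apply/andP; split; apply/eqP; nra.
have vv : ip v v = 1.
  rewrite /v ipZl ipZr ipDl !ipDr !ipNl !ipNr ua ub oab oba; apply/eqP; rewrite eq_complex /=.
  by apply/andP; split; apply/eqP; nra.
have uv : ip u v = 0.
  rewrite /u /v ipZl ipZr ipDl !ipDr !ipNr ua ub oab oba; apply/eqP; rewrite eq_complex /=.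
  by apply/andP; split; apply/eqP; nra.
have [Kb _] := K M hsep u v iu iv uu vv uv.
set p := fun j : 'I_N => complex.Re (a j 0) ^+ 2 + complex.Im (a j 0) ^+ 2.
set q := fun j : 'I_N => complex.Re (b j 0) ^+ 2 + complex.Im (b j 0) ^+ 2.
have eKb : \sum_j `|complex.Re ((u j 0)^* * v j 0)| = \sum_j (1/2) * `|p j - q j|.
  apply: eq_bigr => j _; rewrite /u /v !mxE rot t2 normrM (ger0_norm (x := 1/2)) //.
  lra.
have sa : \sum_j p j = 1.
  by have := congr1 (@complex.Re R) ua; rewrite ipww.
have sb : \sum_j q j = 1.
  by have := congr1 (@complex.Re R) ub; rewrite ipww.
move: Ka1; under eq_bigr do rewrite ReM; move=> Ka1.
move: Ka2; under eq_bigr do rewrite ImM; move=> Ka2.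
have key : \sum_j (p j + q j) <= \sum_j (`|p j - q j| + 2 * (`|complex.Re (a j 0) * complex.Re (b j 0) + complex.Im (a j 0) * complex.Im (b j 0)| + `|complex.Re (a j 0) * complex.Im (b j 0) - complex.Im (a j 0) * complex.Re (b j 0)|)).
  apply: ler_sum => j _; exact: pointwise.
move: key; rewrite [X in X <= _]big_split /= sa sb big_split /= -mulr_sumr big_split /=.
rewrite eKb -mulr_sumr in Kb.
lra.
Qed.
End S.

Theorem theorem4 (R : realType) (n : nat) (hn : (1 <= n)%N) :
  ~ exists M : 'M[R[i]]_(2, 2 ^ n),
      \rank M = 2%N /\ separates M (E_phase (R := R) (n := n)) (1 / 10).
Proof.
move=> [M [rk hs]]; exact: (@main_false R n M rk hs).
Qed.
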